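(* Let $D=\{z\in\mathbb{C}:|z|<1\}$, $\mathbb{T}=\partial D$, and let $A_0(\hat{\mathbb{C}}\setminus\overline{D})$ be the space of functions $f:\{z\in\mathbb{C}:|z|\ge 1\}\to\mathbb{C}$ that are continuous on $\{|z|\ge1\}$, holomorphic on $\{|z|>1\}$ and satisfy $\lim_{z\to\infty}f(z)=0$, endowed with the topology of uniform convergence on compact subsets of $\{z\in\mathbb{C}:|z|\ge1\}$. Then the set of functions $f\in A_0(\hat{\mathbb{C}}\setminus\overline{D})$ such that $f\restriction_{\mathbb{T}}\in Z$ is a dense $G_\delta$ subset of $A_0(\hat{\mathbb{C}}\setminus\overline{D})$.
   Context: A function $g$ on $\mathbb{T}$ is identified with the $2\pi$-periodic function $y\mapsto g(e^{iy})$ on $\mathbb{R}$, and one writes $g(y)$ for $g(e^{iy})$. The class $Z$ consists of all continuous $f:\mathbb{T}\to\mathbb{C}$ such that for every $\theta\in\mathbb{R}$ $$\limsup_{y\to\theta^+}\left|\frac{\operatorname{Re}f(y)-\operatorname{Re}f(\theta)}{y-\theta}\right|=+\infty\quad\text{and}\quad \limsup_{y\to\theta^+}\left|\frac{\operatorname{Im}f(y)-\operatorname{Im}f(\theta)}{y-\theta}\right|=+\infty.$$ *)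

(* Defs.v *)
From Stdlib Require Import Reals List.
From Coquelicot Require Import Coquelicot.
Open Scope R_scope.

Definition expi (y : R) : C := (cos y, sin y).

Definition ext_closed (z : C) : Prop := 1 <= Cmod z.

Definition compactC (K : C -> Prop) : Prop :=
  forall (I : Type) (O : I -> C -> Prop),
    (forall i, open (O i)) ->
    (forall z, K z -> exists i, O i z) ->
    exists l : list I, forall z, K z -> exists i, In i l /\ O i z.

Definition C_differentiable (f : C -> C) (z : C) : Prop :=
  @ex_derive C_AbsRing C_NormedModule f z.

(* The space A_0(Ĉ \ closed D).  A function on {|z| >= 1} is represented by
   f : C -> C normalised to be 0 on the open disc, so that the representation
   is bijective. *)
Definition A0 (f : C -> C) : Prop :=
  (forall z, ext_closed z -> forall eps, 0 < eps -> exists delta, 0 < delta /\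
     forall w, ext_closed w -> Cmod (Cminus w z) < delta ->
       Cmod (Cminus (f w) (f z)) < eps) /\
  (forall z, 1 < Cmod z -> C_differentiable f z) /\
  (forall eps, 0 < eps -> exists M, forall z, M < Cmod z -> Cmod (f z) < eps) /\
  (forall z, Cmod z < 1 -> f z = 0).

(* Open subsets of A0 for the topology of uniform convergence on compact
   subsets of {|z| >= 1}: the open set is U ∩ A0. *)
Definition A0_open (U : (C -> C) -> Prop) : Prop :=
  forall f, A0 f -> U f ->
    exists (K : C -> Prop) (eps : R),
      compactC K /\ (forall z, K z -> ext_closed z) /\ 0 < eps /\
      forall g, A0 g -> (forall z, K z -> Cmod (Cminus (g z) (f z)) < eps) -> U g.

Definition A0_Gdelta (S : (C -> C) -> Prop) : Prop :=
  exists U : nat -> (C -> C) -> Prop,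
    (forall n, A0_open (U n)) /\
    forall f, A0 f -> (S f <-> forall n, U n f).

Definition A0_dense (S : (C -> C) -> Prop) : Prop :=
  forall U, A0_open U -> (exists f, A0 f /\ U f) -> exists g, A0 g /\ U g /\ S g.

Definition limsup_right_infinite (h : R -> R) (theta : R) : Prop :=
  forall M delta, 0 < delta -> exists y, theta < y < theta + delta /\
    M < Rabs ((h y - h theta) / (y - theta)).

Definition class_Z (g : C -> C) : Prop :=
  (forall z, Cmod z = 1 -> forall eps, 0 < eps -> exists delta, 0 < delta /\
     forall w, Cmod w = 1 -> Cmod (Cminus w z) < delta ->
       Cmod (Cminus (g w) (g z)) < eps) /\
  forall theta : R,
    limsup_right_infinite (fun y => fst (g (expi y))) theta /\
    limsup_right_infinite (fun y => snd (g (expi y))) theta.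

(* Main.v *)
Require Import Defs.
From Stdlib Require Import Reals Lra Lia Psatz ZArith List Classical ClassicalEpsilon.
From Coquelicot Require Import Coquelicot.


Lemma crit (f : C -> C) z0 L :
  (forall eps, 0 < eps -> exists d, 0 < d /\ forall z, Cmod (Cminus z z0) < d ->
     Cmod (Cminus (Cminus (f z) (f z0)) (Cmult L (Cminus z z0))) <= eps * Cmod (Cminus z z0)) ->
  C_differentiable f z0.
Proof.
  intros H. exists L. split; [apply is_linear_scal_l|].
  intros x Hx.
  assert (Hx2 := @is_filter_lim_locally_unique C_AbsRing (AbsRing_NormedModule C_AbsRing) z0 x Hx); subst x.
  intros eps. destruct (H eps (cond_pos eps)) as [d [Hd Hz]].
  exists (mkposreal _ Hd). intros y Hy. 
  specialize (Hz y Hy).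
  idtac.
  change (Cmod (Cminus (Cminus (f y) (f z0)) (Cmult (Cminus y z0) L)) <= eps * Cmod (Cminus y z0)).
  rewrite Cmult_comm. exact Hz.
Qed.

Lemma crit_inv (f : C -> C) z0 :
  C_differentiable f z0 -> exists L,
  forall eps, 0 < eps -> exists d, 0 < d /\ forall z, Cmod (Cminus z z0) < d ->
     Cmod (Cminus (Cminus (f z) (f z0)) (Cmult L (Cminus z z0))) <= eps * Cmod (Cminus z z0).
Proof.
  intros [L [_ H]]. exists L. intros eps He.
  specialize (H z0 (fun P HP => HP)).
  destruct (H (mkposreal _ He)) as [d Hd]. exists d. split; [apply cond_pos|].
  intros z Hz. specialize (Hd z Hz).
  simpl in Hd.
  change (Cmod (Cminus (Cminus (f z) (f z0)) (Cmult (Cminus z z0) L)) <= eps * Cmod (Cminus z z0)) in Hd.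
  rewrite Cmult_comm in Hd. exact Hd.
Qed.

Lemma cos_lip x y : Rabs (cos x - cos y) <= Rabs (x - y).
Proof.
  destruct (MVT_abs cos (fun t => - sin t) y x) as [c [Hc _]].
  { intros; apply derivable_pt_lim_cos. }
  rewrite Hc. rewrite Rabs_Ropp. rewrite <- (Rmult_1_l (Rabs (x - y))) at 2.
  apply Rmult_le_compat_r; [apply Rabs_pos|]. apply Rabs_le. apply SIN_bound.
Qed.

Lemma sin_lip x y : Rabs (sin x - sin y) <= Rabs (x - y).
Proof.
  destruct (MVT_abs sin cos y x) as [c [Hc _]].
  { intros; apply derivable_pt_lim_sin. }
  rewrite Hc. rewrite <- (Rmult_1_l (Rabs (x - y))) at 2.
  apply Rmult_le_compat_r; [apply Rabs_pos|]. apply Rabs_le. apply COS_bound.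
Qed.

Lemma Cmod_le_sum (c : C) : Cmod c <= Rabs (fst c) + Rabs (snd c).
Proof.
  destruct c as [x y]. unfold Cmod; simpl.
  rewrite <- (sqrt_Rsqr (Rabs x + Rabs y)) by (generalize (Rabs_pos x) (Rabs_pos y); lra).
  apply sqrt_le_1_alt. unfold Rsqr.
  assert (x*x = Rabs x * Rabs x) by (rewrite <- Rabs_mult; symmetry; apply Rabs_right; nra).
  assert (y*y = Rabs y * Rabs y) by (rewrite <- Rabs_mult; symmetry; apply Rabs_right; nra).
  generalize (Rabs_pos x) (Rabs_pos y); nra.
Qed.

Lemma fst_le (c : C) : Rabs (fst c) <= Cmod c.
Proof. apply re_le_Cmod. Qed.

Lemma snd_le (c : C) : Rabs (snd c) <= Cmod c.
Proof.
  destruct c as [x y]. unfold Cmod; simpl.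
  rewrite <- (sqrt_Rsqr (Rabs y)) by apply Rabs_pos.
  apply sqrt_le_1_alt. unfold Rsqr.
  assert (y*y = Rabs y * Rabs y) by (rewrite <- Rabs_mult; symmetry; apply Rabs_right; nra).
  nra.
Qed.

Lemma Cmod_expi y : Cmod (expi y) = 1.
Proof.
  unfold Cmod, expi; simpl.
  replace (cos y * (cos y * 1) + sin y * (sin y * 1)) with 1 by (generalize (sin2_cos2 y); unfold Rsqr; lra).
  apply sqrt_1.
Qed.

Lemma expi_lip y t : Cmod (Cminus (expi y) (expi t)) <= 2 * Rabs (y - t).
Proof.
  eapply Rle_trans; [apply Cmod_le_sum|]. simpl.
  generalize (cos_lip y t) (sin_lip y t). unfold Rminus. lra.
Qed.

Lemma Cinv_expi y : Cinv (expi y) = expi (- y).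
Proof.
  unfold Cinv, expi; simpl. rewrite cos_neg, sin_neg.
  assert (H : cos y * (cos y * 1) + sin y * (sin y * 1) = 1)
    by (generalize (sin2_cos2 y); unfold Rsqr; lra).
  rewrite H. f_equal; field.
Qed.

Lemma Cpow_expi y N : Cpow (expi y) N = expi (INR N * y).
Proof.
  induction N as [|N IH].
  - simpl. unfold expi. rewrite Rmult_0_l, cos_0, sin_0. reflexivity.
  - simpl Cpow. rewrite IH. rewrite S_INR.
    unfold expi, Cmult; simpl.
    replace ((INR N + 1) * y) with (y + INR N * y) by ring.
    rewrite cos_plus, sin_plus. f_equal; ring.
Qed.

Lemma cos_period_Z x (k : Z) : cos (x + 2 * IZR k * PI) = cos x.
Proof.
  destruct (Z_le_gt_dec 0 k) as [Hk|Hk].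
  - rewrite <- (Z2Nat.id k Hk). rewrite <- INR_IZR_INZ. apply cos_period.
  - assert (Hk' : (0 <= - k)%Z) by lia.
    replace (IZR k) with (- INR (Z.to_nat (- k))).
    + rewrite <- (cos_period (x + 2 * - INR (Z.to_nat (- k)) * PI) (Z.to_nat (-k))).
      f_equal; ring.
    + rewrite INR_IZR_INZ, Z2Nat.id by exact Hk'. rewrite opp_IZR. ring.
Qed.



Lemma ex_series_geomK K : ex_series (fun n => K * (/2)^n).
Proof.
  apply (ex_series_scal_l K (fun n => (/2)^n)). apply ex_series_geom.
  rewrite Rabs_right; lra.
Qed.

Lemma ex_series_bound (u : nat -> R) K :
  (forall n, Rabs (u n) <= K * (/2)^n) -> ex_series u.
Proof.
  intros H. apply ex_series_Rabs. apply (@ex_series_le R_AbsRing R_CompleteNormedModule _ (fun n => K * (/2)^n)).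
  - intros n. unfold norm; simpl. unfold abs; simpl. rewrite Rabs_Rabsolu. apply H.
  - apply ex_series_geomK.
Qed.

Lemma Series_zero : Series (fun _ => 0) = 0.
Proof.
  rewrite <- (Series_ext (fun n => 0 * 1)) by (intros; ring).
  rewrite Series_scal_l. ring.
Qed.

Lemma Series_nonneg (u : nat -> R) : (forall n, 0 <= u n) -> ex_series u -> 0 <= Series u.
Proof.
  intros H He. rewrite <- Series_zero. apply Series_le; auto. intros n; split; [lra|auto].
Qed.

Lemma Series_bound (u : nat -> R) K :
  (forall n, Rabs (u n) <= K * (/2)^n) -> Rabs (Series u) <= 2 * K.
Proof.
  intros H. eapply Rle_trans. apply Series_Rabs.
  { apply ex_series_bound with K. intros n; rewrite Rabs_Rabsolu; auto. }
  replace (2 * K) with (Series (fun n => K * (/2)^n)).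
  - apply Series_le. intros n; split; [apply Rabs_pos| auto]. apply ex_series_geomK.
  - rewrite (Series_scal_l K (fun n => (/2)^n)).
    rewrite (is_series_unique _ _ (is_series_geom (/2) ltac:(rewrite Rabs_right; lra))).
    field.
Qed.

Definition Nn (n : nat) : nat := (29 ^ n)%nat.
Definition Wt (y : R) : R := Series (fun n => (/4)^n * cos (INR (Nn n) * y)).

Definition ZR (H : R -> R) : Prop :=
  forall theta M delta, 0 < delta -> exists y, theta < y < theta + delta /\
    M * (y - theta) < Rabs (H y - H theta).

Lemma Nn_odd n : exists j, Nn n = (2 * j + 1)%nat.
Proof.
  induction n as [|n [j Hj]]. exists 0%nat; reflexivity.
  exists (29 * j + 14)%nat. unfold Nn in *. simpl Nat.pow. rewrite Hj. lia.
Qed.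

Lemma Nn_1mod4 n : exists j, Nn n = (4 * j + 1)%nat.
Proof.
  induction n as [|n [j Hj]]. exists 0%nat; reflexivity.
  exists (29 * j + 7)%nat. unfold Nn in *. simpl Nat.pow. rewrite Hj. lia.
Qed.

Lemma cos_odd_mult (z : Z) j phi :
  cos (INR (2 * j + 1) * (IZR z * PI) + phi) = cos (IZR z * PI) * cos phi.
Proof.
  replace (INR (2 * j + 1) * (IZR z * PI) + phi) with ((IZR z * PI + phi) + 2 * IZR (Z.of_nat j * z) * PI).
  - rewrite cos_period_Z. rewrite cos_plus.
    rewrite (sin_eq_0_1 (IZR z * PI)) by (exists z; reflexivity). ring.
  - rewrite mult_IZR, <- INR_IZR_INZ, plus_INR, mult_INR. simpl. ring.
Qed.

Lemma sin_IZR_PI z : sin (IZR z * PI) = 0.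
Proof. apply sin_eq_0_1. exists z; reflexivity. Qed.

Lemma INR_Nn_ge n : INR n + 1 <= INR (Nn n).
Proof.
  induction n as [|n IH]. unfold Nn; simpl; lra.
  unfold Nn in *. rewrite S_INR. rewrite Nat.pow_succ_r'. rewrite mult_INR.
  replace (INR 29) with 29 by (simpl; ring). generalize (pos_INR n); lra.
Qed.

Lemma pow_ge_lin n : INR n + 1 <= (29/4)^n.
Proof.
  induction n as [|n IH]. simpl; lra.
  rewrite S_INR. simpl. generalize (pos_INR n); lra.
Qed.

Lemma cos_diff2 x y : Rabs (cos x - cos y) <= 2.
Proof.
  unfold Rminus. eapply Rle_trans. apply Rabs_triang. rewrite Rabs_Ropp.
  assert (Rabs (cos x) <= 1) by (apply Rabs_le; apply COS_bound). assert (Rabs (cos y) <= 1) by (apply Rabs_le; apply COS_bound). lra.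
Qed.

Lemma Wt_ex (y t : R) : ex_series (fun n => (/4)^n * (cos (INR (Nn n) * y) - cos (INR (Nn n) * t))).
Proof.
  apply ex_series_bound with 2. intros n.
  rewrite Rabs_mult. rewrite Rabs_right by (apply Rle_ge, pow_le; lra).
  assert ((/4)^n <= (/2)^n) by (apply pow_incr; lra).
  generalize (cos_diff2 (INR (Nn n) * y) (INR (Nn n) * t)) (pow_le (/4) n ltac:(lra)). nra.
Qed.

Lemma Wt_ex1 (y : R) : ex_series (fun n => (/4)^n * cos (INR (Nn n) * y)).
Proof.
  apply ex_series_bound with 1. intros n.
  rewrite Rabs_mult. rewrite Rabs_right by (apply Rle_ge, pow_le; lra).
  assert ((/4)^n <= (/2)^n) by (apply pow_incr; lra).
  assert (Rabs (cos (INR (Nn n) * y)) <= 1) by (apply Rabs_le; apply COS_bound). generalize (pow_le (/4) n ltac:(lra)). nra.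
Qed.

Lemma Wt_diff y t : Wt y - Wt t = Series (fun n => (/4)^n * (cos (INR (Nn n) * y) - cos (INR (Nn n) * t))).
Proof.
  unfold Wt. rewrite <- Series_minus by apply Wt_ex1. apply Series_ext; intros; ring.
Qed.

Lemma nat_above X : exists m : nat, X < INR m.
Proof.
  destruct (Rle_or_lt X 0) as [H|H].
  - exists 1%nat. simpl; lra.
  - destruct (archimed X) as [H1 _].
    assert (Hp : (0 <= up X)%Z) by (apply le_IZR; lra).
    exists (Z.to_nat (up X)). rewrite INR_IZR_INZ, Z2Nat.id by exact Hp. lra.
Qed.

Lemma INR_Nn n : INR (Nn n) = 29 ^ n.
Proof. unfold Nn. rewrite pow_INR. f_equal. simpl; ring. Qed.

Lemma weier : ZR Wt.
Proof.
  intros theta M delta Hdelta.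
  destruct (nat_above (150 * Rabs M + 6 / delta)) as [m Hm].
  assert (H6 : 0 < 6 / delta) by (apply Rdiv_lt_0_compat; lra).
  generalize (Rabs_pos M); intro HM.
  assert (Hm0 : (0 < m)%nat) by (destruct m; [simpl in Hm; lra| lia]).
  set (B := INR (Nn m)).
  assert (HB : INR m + 1 <= B) by apply INR_Nn_ge.
  assert (HBpos : 0 < B) by (generalize (pos_INR m); lra).
  assert (HPI := PI_RGT_0). assert (HPI4 := PI_4).
  set (t := B * theta / PI).
  set (alpha := (up (t + /2) - 1)%Z).
  assert (Ha : IZR alpha <= t + /2 < IZR alpha + 1).
  { unfold alpha. rewrite minus_IZR. destruct (archimed (t + /2)). simpl; lra. }
  set (xi := t - IZR alpha).
  assert (Hxi : - /2 <= xi < /2) by (unfold xi; lra).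
  set (y := (IZR alpha + 1) * PI / B).
  assert (Hyt : y - theta = PI * (1 - xi) / B).
  { unfold y, xi, t. field. split; lra. }
  assert (Hyt_pos : 0 < y - theta).
  { rewrite Hyt. apply Rdiv_lt_0_compat; [|lra]. apply Rmult_lt_0_compat; lra. }
  assert (Hyt_le : (y - theta) * B <= 6).
  { rewrite Hyt. unfold Rdiv. rewrite Rmult_assoc, Rinv_l by lra. nra. }
  exists y. split.
  { split; [lra|].
    assert (6 / B < delta).
    { apply (Rmult_lt_reg_r B); [lra|]. unfold Rdiv. rewrite Rmult_assoc, Rinv_l by lra.
      assert (6 / delta < B) by lra. apply (Rmult_lt_reg_r (/delta)). apply Rinv_0_lt_compat; lra.
      unfold Rdiv in H. replace (delta * B * / delta) with B by (field; lra). lra. }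
    assert (y - theta <= 6 / B).
    { apply (Rmult_le_reg_r B); [lra|]. unfold Rdiv. rewrite Rmult_assoc, Rinv_l by lra. lra. }
    lra. }
  set (d := fun n => (/4)^n * (cos (INR (Nn n) * y) - cos (INR (Nn n) * theta))).
  assert (Hd : Wt y - Wt theta = Series d) by apply Wt_diff.
  rewrite Hd.
  rewrite (Series_incr_n d m Hm0 (Wt_ex y theta)).
  set (sigma := cos (IZR alpha * PI)).
  assert (Hsig : Rabs sigma = 1).
  { assert (sigma * sigma = 1).
    { unfold sigma. generalize (sin2_cos2 (IZR alpha * PI)). rewrite sin_IZR_PI. unfold Rsqr. lra. }
    destruct (Rle_or_lt 0 sigma); [rewrite Rabs_right by lra | rewrite Rabs_left by lra]; nra. }
  set (e := fun k => (/4)^k * (1 + cos (INR (Nn k) * (PI * xi)))).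
  assert (Htail : forall k, d (m + k)%nat = (/4)^m * - sigma * e k).
  { intros k. unfold d, e.
    destruct (Nn_odd k) as [j Hj].
    assert (E1 : INR (Nn (m + k)) * y = INR (Nn k) * (IZR (alpha + 1) * PI) + 0).
    { unfold Nn. rewrite Nat.pow_add_r, mult_INR. fold (Nn m) (Nn k). fold B.
      rewrite plus_IZR. unfold y. simpl. field. lra. }
    assert (E2 : INR (Nn (m + k)) * theta = INR (Nn k) * (IZR alpha * PI) + INR (Nn k) * (PI * xi)).
    { unfold Nn. rewrite Nat.pow_add_r, mult_INR. fold (Nn m) (Nn k). fold B.
      unfold xi, t. field. lra. }
    rewrite E1, E2, Hj, !cos_odd_mult, <- Hj, cos_0.
    rewrite plus_IZR, Rmult_plus_distr_r, Rmult_1_l, neg_cos. fold sigma.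
    rewrite pow_add. ring. }
  assert (Hex_e : ex_series e).
  { apply ex_series_bound with 2. intros k. unfold e.
    rewrite Rabs_mult. rewrite Rabs_right by (apply Rle_ge, pow_le; lra).
    assert ((/4)^k <= (/2)^k) by (apply pow_incr; lra).
    assert (Rabs (1 + cos (INR (Nn k) * (PI * xi))) <= 2).
    { assert (-1 <= cos (INR (Nn k) * (PI * xi)) <= 1) by apply COS_bound. apply Rabs_le; lra. }
    generalize (pow_le (/4) k ltac:(lra)). nra. }
  assert (He1 : 1 <= Series e).
  { rewrite (Series_incr_1 e Hex_e).
    assert (0 <= Series (fun k => e (S k))).
    { apply Series_nonneg.
      - intros k. unfold e. apply Rmult_le_pos. apply pow_le; lra.
        assert (-1 <= cos (INR (Nn (S k)) * (PI * xi)) <= 1) by apply COS_bound. lra.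
      - apply (ex_series_incr_1 e). exact Hex_e. }
    assert (1 <= e 0%nat).
    { unfold e. unfold Nn. simpl. rewrite Rmult_1_l.
      assert (0 <= cos (PI * xi)) by (apply cos_ge_0; nra). rewrite Rmult_1_l. lra. }
    lra. }
  assert (HT : Series (fun k => d (m + k)%nat) = (/4)^m * - sigma * Series e).
  { rewrite <- Series_scal_l. apply Series_ext. exact Htail. }
  assert (HTabs : (/4)^m <= Rabs (Series (fun k => d (m + k)%nat))).
  { rewrite HT. rewrite !Rabs_mult, Rabs_Ropp, Hsig.
    rewrite Rabs_right by (apply Rle_ge, pow_le; lra). rewrite (Rabs_right (Series e)) by lra.
    generalize (pow_le (/4) m ltac:(lra)). nra. }
  set (P := (29/4)^m).
  assert (HP : INR m + 1 <= P) by apply pow_ge_lin.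
  assert (HPB : (/4)^m * B = P).
  { unfold B, P. rewrite INR_Nn. rewrite <- Rpow_mult_distr. f_equal. field. }
  assert (Hhead : Rabs (sum_f_R0 d (pred m)) <= (y - theta) * (4/25 * P)).
  { eapply Rle_trans. apply sum_f_R0_triangle.
    apply Rle_trans with (sum_f_R0 (fun n => (29/4)^n * (y - theta)) (pred m)).
    - apply sum_Rle. intros n _. unfold d.
      rewrite Rabs_mult, Rabs_right by (apply Rle_ge, pow_le; lra).
      eapply Rle_trans. apply Rmult_le_compat_l. apply pow_le; lra. apply cos_lip.
      rewrite <- Rmult_minus_distr_l, Rabs_mult, Rabs_right by (apply Rle_ge, pos_INR).
      rewrite (Rabs_right (y - theta)) by lra. rewrite INR_Nn.
      replace ((29/4)^n) with ((/4)^n * 29^n) by (rewrite <- Rpow_mult_distr; f_equal; field).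
      apply Req_le; ring.
    - rewrite <- scal_sum.
      assert (HG := GP_finite (29/4) (pred m)).
      replace (pred m + 1)%nat with m in HG by lia. fold P in HG.
      assert (sum_f_R0 (fun n => (29/4)^n) (pred m) = (P - 1) / (25/4)).
      { apply (Rmult_eq_reg_r (29/4 - 1)); [|lra]. rewrite HG. field. }
      apply Rmult_le_compat_l; [lra|].
      change (sum_f_R0 (fun n => (29/4)^n) (pred m) <= 4/25*P). rewrite H.
      unfold Rdiv. lra. }
  assert (Hlow : (y - theta) * P <= 6 * (/4)^m).
  { rewrite <- HPB. generalize (pow_le (/4) m ltac:(lra)). nra. }
  assert (Htri : Rabs (Series (fun k => d (m + k)%nat)) - Rabs (sum_f_R0 d (pred m))
                 <= Rabs (sum_f_R0 d (pred m) + Series (fun k => d (m + k)%nat))).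
  { rewrite Rplus_comm. replace (Series (fun k => d (m + k)%nat)) with
      ((Series (fun k => d (m + k)%nat) + sum_f_R0 d (pred m)) - sum_f_R0 d (pred m)) at 1 by ring.
    generalize (Rabs_triang_inv (Series (fun k => d (m + k)%nat) + sum_f_R0 d (pred m)) (sum_f_R0 d (pred m))).
    intros H. eapply Rle_trans; [|apply Rle_refl].
    generalize (Rabs_triang (Series (fun k => d (m + k)%nat) + sum_f_R0 d (pred m)) (- sum_f_R0 d (pred m))).
    rewrite Rabs_Ropp. intros H'. unfold Rminus in *. lra. }
  assert (M * (y - theta) <= Rabs M * (y - theta)) by (apply Rmult_le_compat_r; [lra| apply Rle_abs]).
  assert (Rabs M * 150 < P) by lra.
  nra.
Qed.

Lemma ZR_shift H c : ZR H -> ZR (fun y => - H (y - c)).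
Proof.
  intros HZ theta M delta Hd.
  destruct (HZ (theta - c) M delta Hd) as [y [Hy HM]].
  exists (y + c). split; [lra|].
  replace (y + c - c) with y by ring. replace (y + c - theta) with (y - (theta - c)) by ring.
  replace (- H y - - H (theta - c)) with (- (H y - H (theta - c))) by ring.
  rewrite Rabs_Ropp. exact HM.
Qed.

Lemma ZR_perturb (F H : R -> R) c : ZR H -> 0 < c ->
  (forall theta, exists B d, 0 < d /\ forall y, theta < y < theta + d ->
     Rabs (F y - F theta) <= B * (y - theta)) ->
  ZR (fun y => F y + c * H y).
Proof.
  intros HZ Hc HF theta M delta Hd.
  destruct (HF theta) as [B [d [Hd0 HB]]].
  destruct (HZ theta ((M + B) / c) (Rmin delta d) ltac:(apply Rmin_glb_lt; lra)) as [y [Hy HM]].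
  assert (Hy1 : y < theta + delta) by (generalize (Rmin_l delta d); lra).
  assert (Hy2 : y < theta + d) by (generalize (Rmin_r delta d); lra).
  exists y. split; [lra|].
  specialize (HB y ltac:(lra)).
  assert (E : (M + B) / c * (y - theta) * c = (M + B) * (y - theta)) by (field; lra).
  assert (c * Rabs (H y - H theta) > (M + B) * (y - theta)).
  { rewrite <- E. rewrite (Rmult_comm c). apply Rmult_lt_compat_r; lra. }
  replace (F y + c * H y - (F theta + c * H theta)) with (c * (H y - H theta) + (F y - F theta)) by ring.
  generalize (Rabs_triang_inv (c * (H y - H theta)) (- (F y - F theta))).
  rewrite Rabs_Ropp, Rabs_mult, (Rabs_right c) by lra.
  replace (c * (H y - H theta) - - (F y - F theta)) with (c * (H y - H theta) + (F y - F theta)) by ring.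
  lra.
Qed.

Lemma ZR_limsup H : ZR H -> forall theta, limsup_right_infinite H theta.
Proof.
  intros HZ theta M delta Hd.
  destruct (HZ theta M delta Hd) as [y [Hy HM]]. exists y. split; [exact Hy|].
  unfold Rdiv. rewrite Rabs_mult, Rabs_Rinv by lra. rewrite (Rabs_right (y - theta)) by lra.
  apply (Rmult_lt_reg_r (y - theta)); [lra|]. rewrite Rmult_assoc, Rinv_l by lra. lra.
Qed.


Definition CS (u : nat -> C) : C := (Series (fun n => fst (u n)), Series (fun n => snd (u n))).
Definition CB (u : nat -> C) K := forall n, Cmod (u n) <= K * (/2)^n.

Lemma CB_fst u K : CB u K -> ex_series (fun n => fst (u n)).
Proof. intros H. apply ex_series_bound with K. intros n. eapply Rle_trans; [apply fst_le|apply H]. Qed.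
Lemma CB_snd u K : CB u K -> ex_series (fun n => snd (u n)).
Proof. intros H. apply ex_series_bound with K. intros n. eapply Rle_trans; [apply snd_le|apply H]. Qed.

Lemma CS_bound u K : CB u K -> Cmod (CS u) <= 4 * K.
Proof.
  intros H. eapply Rle_trans; [apply Cmod_le_sum|]. unfold CS; simpl.
  assert (Rabs (Series (fun n => fst (u n))) <= 2 * K).
  { apply Series_bound. intros n. eapply Rle_trans; [apply fst_le|apply H]. }
  assert (Rabs (Series (fun n => snd (u n))) <= 2 * K).
  { apply Series_bound. intros n. eapply Rle_trans; [apply snd_le|apply H]. }
  lra.
Qed.

Lemma CS_minus u v K1 K2 : CB u K1 -> CB v K2 ->
  CS (fun n => Cminus (u n) (v n)) = Cminus (CS u) (CS v).
Proof.
  intros Hu Hv. unfold CS, Cminus, Cplus, Copp; simpl. f_equal.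
  - rewrite (Series_ext _ (fun n => fst (u n) - fst (v n))) by (intros; simpl; ring).
    rewrite Series_minus by (eapply CB_fst; eauto). ring.
  - rewrite (Series_ext _ (fun n => snd (u n) - snd (v n))) by (intros; simpl; ring).
    rewrite Series_minus by (eapply CB_snd; eauto). ring.
Qed.

Lemma CS_scal u c K : CB u K -> CS (fun n => Cmult c (u n)) = Cmult c (CS u).
Proof.
  intros Hu. unfold CS, Cmult; simpl. f_equal.
  - try rewrite (Series_ext _ (fun n => fst c * fst (u n) - snd c * snd (u n))) by (intros; simpl; ring).
    rewrite Series_minus. rewrite !Series_scal_l. ring.
    apply (ex_series_scal_l (fst c) (fun n => fst (u n))). eapply CB_fst; eauto.
    apply (ex_series_scal_l (snd c) (fun n => snd (u n))). eapply CB_snd; eauto.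
  - try rewrite (Series_ext _ (fun n => fst c * snd (u n) + snd c * fst (u n))) by (intros; simpl; ring).
    rewrite Series_plus. rewrite !Series_scal_l. ring.
    apply (ex_series_scal_l (fst c) (fun n => snd (u n))). eapply CB_snd; eauto.
    apply (ex_series_scal_l (snd c) (fun n => fst (u n))). eapply CB_fst; eauto.
Qed.

Lemma CB_minus u v K1 K2 : CB u K1 -> CB v K2 -> CB (fun n => Cminus (u n) (v n)) (K1 + K2).
Proof.
  intros Hu Hv n. unfold Cminus. eapply Rle_trans; [apply Cmod_triangle|].
  rewrite Cmod_opp. generalize (Hu n) (Hv n). lra.
Qed.

Lemma CB_scal u c K : CB u K -> CB (fun n => Cmult c (u n)) (Cmod c * K).
Proof.
  intros Hu n. rewrite Cmod_mult. rewrite Rmult_assoc. apply Rmult_le_compat_l; [apply Cmod_ge_0| apply Hu].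
Qed.

Lemma CS_ext u v : (forall n, u n = v n) -> CS u = CS v.
Proof. intros H. unfold CS. f_equal; apply Series_ext; intros; rewrite H; reflexivity. Qed.

Lemma CS_lin A B L d KA KB KL : CB A KA -> CB B KB -> CB L KL ->
  CS (fun n => Cminus (Cminus (A n) (B n)) (Cmult (L n) d)) =
  Cminus (Cminus (CS A) (CS B)) (Cmult (CS L) d).
Proof.
  intros HA HB HL.
  assert (HL' : CB (fun n => Cmult d (L n)) (Cmod d * KL)) by (apply CB_scal; auto).
  rewrite (CS_ext _ (fun n => Cminus (Cminus (A n) (B n)) (Cmult d (L n)))) by (intros; f_equal; apply Cmult_comm).
  rewrite (CS_minus (fun n => Cminus (A n) (B n)) (fun n => Cmult d (L n)) (KA + KB) (Cmod d * KL)).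
  - rewrite (CS_minus A B KA KB HA HB). rewrite (CS_scal L d KL HL). f_equal. apply Cmult_comm.
  - apply CB_minus; auto.
  - auto.
Qed.

Lemma Cmod_RtoC_mult x c : Cmod (Cmult (RtoC x) c) = Rabs x * Cmod c.
Proof. rewrite Cmod_mult, Cmod_R. reflexivity. Qed.

Lemma nz_of_ge1 z : 1 <= Cmod z -> z <> RtoC 0.
Proof. intros H E. rewrite E, Cmod_0 in H. lra. Qed.

Lemma Cmod_Cinv z : 0 < Cmod z -> Cmod (Cinv z) = / Cmod z.
Proof. intros H. apply Cmod_inv. apply Cmod_gt_0. exact H. Qed.

Lemma Cinv_diff w z : w <> RtoC 0 -> z <> RtoC 0 ->
  Cminus (Cinv w) (Cinv z) = Cmult (Cmult (Cminus z w) (Cinv w)) (Cinv z).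
Proof. intros Hw Hz. unfold Cminus. field. split; auto. Qed.

Lemma Cinv_lip w z : 1 <= Cmod w -> 1 <= Cmod z -> Cmod (Cminus (Cinv w) (Cinv z)) <= Cmod (Cminus w z).
Proof.
  intros Hw Hz. rewrite Cinv_diff by (apply nz_of_ge1; auto).
  rewrite !Cmod_mult, !Cmod_Cinv by lra.
  replace (Cminus z w) with (Copp (Cminus w z)) by (unfold Cminus; ring). rewrite Cmod_opp.
  assert (/ Cmod w <= 1) by (rewrite <- Rinv_1; apply Rinv_le_contravar; lra).
  assert (/ Cmod z <= 1) by (rewrite <- Rinv_1; apply Rinv_le_contravar; lra).
  assert (0 < / Cmod w) by (apply Rinv_0_lt_compat; lra).
  assert (0 < / Cmod z) by (apply Rinv_0_lt_compat; lra).
  generalize (Cmod_ge_0 (Cminus w z)). set (p := / Cmod w) in *. set (q := / Cmod z) in *. set (s := Cmod (Cminus w z)) in *. clearbody p q s. intros. assert (p * q <= 1) by nra. rewrite Rmult_assoc. nra.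
Qed.

Lemma pow_le_1' x N : 0 <= x <= 1 -> x ^ N <= 1.
Proof. intros [H1 H2]. induction N; simpl. lra. assert (0 <= x ^ N) by (apply pow_le; lra). nra. Qed.
Lemma Cpow_le1 u N : Cmod u <= 1 -> Cmod (Cpow u N) <= 1.
Proof. intros H. rewrite Cmod_pow. apply pow_le_1'. split; [apply Cmod_ge_0| auto]. Qed.

Lemma Cpow_lip u v N : Cmod u <= 1 -> Cmod v <= 1 ->
  Cmod (Cminus (Cpow u N) (Cpow v N)) <= INR N * Cmod (Cminus u v).
Proof.
  intros Hu Hv. induction N as [|N IH].
  - simpl. unfold Cminus. replace (Cplus 1 (Copp 1)) with (RtoC 0) by ring. rewrite Cmod_0. lra.
  - simpl Cpow. replace (Cminus (Cmult u (Cpow u N)) (Cmult v (Cpow v N))) with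
      (Cplus (Cmult u (Cminus (Cpow u N) (Cpow v N))) (Cmult (Cminus u v) (Cpow v N))) by (unfold Cminus; ring).
    eapply Rle_trans; [apply Cmod_triangle|]. rewrite !Cmod_mult.
    assert (Cmod (Cpow v N) <= 1) by (apply Cpow_le1; auto).
    generalize (Cmod_ge_0 u) (Cmod_ge_0 (Cminus u v)) (Cmod_ge_0 (Cpow v N)) (Cmod_ge_0 (Cminus (Cpow u N) (Cpow v N))).
    rewrite S_INR. nra.
Qed.

Lemma Cpow_diff2 u v N : Cmod u <= 1 -> Cmod v <= 1 ->
  Cmod (Cminus (Cpow u N) (Cpow v N)) <= 2.
Proof.
  intros Hu Hv. unfold Cminus. eapply Rle_trans; [apply Cmod_triangle|]. rewrite Cmod_opp.
  generalize (Cpow_le1 u N Hu) (Cpow_le1 v N Hv). lra.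
Qed.

Lemma pow_decr x m n : 0 <= x <= 1 -> (m <= n)%nat -> x ^ n <= x ^ m.
Proof.
  intros Hx Hmn. replace n with (m + (n - m))%nat by lia. rewrite pow_add.
  assert (0 <= x ^ m) by (apply pow_le; lra). assert (x ^ (n - m) <= 1) by (apply pow_le_1'; lra).
  assert (0 <= x ^ (n - m)) by (apply pow_le; lra). nra.
Qed.

Definition hterm (n : nat) (z : C) : C := Cmult (RtoC ((/4)^n)) (Cpow (Cinv z) (Nn n)).
Definition hfun (z : C) : C := if Rle_dec 1 (Cmod z) then CS (fun n => hterm n z) else RtoC 0.

Lemma Cmod_inv_le1 z : 1 <= Cmod z -> Cmod (Cinv z) <= 1.
Proof. intros H. rewrite Cmod_Cinv by lra. rewrite <- Rinv_1. apply Rinv_le_contravar; lra. Qed.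

Lemma pow4_le n : (/4)^n <= (/2)^n.
Proof. apply pow_incr; lra. Qed.

Lemma hterm_CB z : 1 <= Cmod z -> CB (fun n => hterm n z) (/ Cmod z).
Proof.
  intros Hz n. unfold hterm. rewrite Cmod_RtoC_mult, Rabs_right by (apply Rle_ge, pow_le; lra).
  rewrite Cmod_pow, Cmod_Cinv by lra.
  destruct (Nn_odd n) as [j Hj]. rewrite Hj. replace (2 * j + 1)%nat with (S (2 * j)) by lia. rewrite <- tech_pow_Rmult.
  assert (0 < / Cmod z <= 1) by (split; [apply Rinv_0_lt_compat; lra| rewrite <- Rinv_1; apply Rinv_le_contravar; lra]).
  assert ((/ Cmod z) ^ (2 * j) <= 1) by (apply pow_le_1'; lra).
  assert (0 <= (/ Cmod z) ^ (2 * j)) by (apply pow_le; lra).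
  generalize (pow4_le n) (pow_le (/4) n ltac:(lra)). intros.
  set (r := / Cmod z) in *. set (p := r ^ (2 * j)) in *. clearbody r p.
  assert (r * p <= r) by nra. nra.
Qed.

Lemma hfun_bound z : 1 <= Cmod z -> Cmod (hfun z) <= 4 / Cmod z.
Proof.
  intros Hz. unfold hfun. destruct (Rle_dec 1 (Cmod z)); [|lra].
  apply CS_bound, hterm_CB, Hz.
Qed.

Lemma hfun_small z : Cmod z < 1 -> hfun z = RtoC 0.
Proof. intros H. unfold hfun. destruct (Rle_dec 1 (Cmod z)); [lra|reflexivity]. Qed.

Lemma pow2_ge n : INR n + 1 <= 2 ^ n.
Proof. induction n. simpl; lra. rewrite S_INR; simpl. generalize (pos_INR n); lra. Qed.

Lemma hfun_cont z : ext_closed z -> forall eps, 0 < eps -> exists delta, 0 < delta /\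
  forall w, ext_closed w -> Cmod (Cminus w z) < delta -> Cmod (Cminus (hfun w) (hfun z)) < eps.
Proof.
  unfold ext_closed. intros Hz eps He.
  destruct (nat_above (16 / eps)) as [Nc HNc].
  assert (HNc2 : 2 * (/2)^Nc < eps / 8).
  { generalize (pow2_ge Nc); intros H2. rewrite <- Rinv_pow by lra.
    assert (0 < 2 ^ Nc) by (apply pow_lt; lra).
    apply (Rmult_lt_reg_r (2^Nc)); [lra|]. rewrite Rmult_assoc, Rinv_l by lra.
    assert (16 / eps < 2^Nc) by lra.
    apply (Rmult_lt_reg_r (/eps * 8)). apply Rmult_lt_0_compat; [apply Rinv_0_lt_compat|]; lra.
    replace (eps / 8 * 2 ^ Nc * (/ eps * 8)) with (2^Nc) by (field; lra). unfold Rdiv in H0. lra. }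
  assert (HP : 0 < 29 ^ Nc) by (apply pow_lt; lra).
  exists (eps / (8 * 29 ^ Nc)). split. { apply Rdiv_lt_0_compat; lra. }
  intros w Hw Hwz.
  set (t := Cmod (Cminus w z)).
  assert (Ht : 29 ^ Nc * t < eps / 8).
  { apply (Rmult_lt_reg_r (/ 29^Nc)). apply Rinv_0_lt_compat; lra.
    replace (29 ^ Nc * t * / 29 ^ Nc) with t by (field; lra).
    replace (eps / 8 * / 29 ^ Nc) with (eps / (8 * 29 ^ Nc)) by (field; lra). exact Hwz. }
  unfold hfun. destruct (Rle_dec 1 (Cmod w)); [|lra]. destruct (Rle_dec 1 (Cmod z)); [|lra].
  rewrite <- (CS_minus _ _ _ _ (hterm_CB w r) (hterm_CB z r0)).
  assert (HB : CB (fun n => Cminus (hterm n w) (hterm n z)) (29 ^ Nc * t + 2 * (/2)^Nc)).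
  { intros n. unfold hterm.
    replace (Cminus (Cmult (RtoC ((/4)^n)) (Cpow (Cinv w) (Nn n))) (Cmult (RtoC ((/4)^n)) (Cpow (Cinv z) (Nn n))))
      with (Cmult (RtoC ((/4)^n)) (Cminus (Cpow (Cinv w) (Nn n)) (Cpow (Cinv z) (Nn n)))) by (unfold Cminus; ring).
    rewrite Cmod_RtoC_mult, Rabs_right by (apply Rle_ge, pow_le; lra).
    assert (H1 := Cmod_inv_le1 w r). assert (H2 := Cmod_inv_le1 z r0).
    assert (Hl : Cmod (Cminus (Cpow (Cinv w) (Nn n)) (Cpow (Cinv z) (Nn n))) <= INR (Nn n) * t).
    { eapply Rle_trans. apply Cpow_lip; auto. apply Rmult_le_compat_l. apply pos_INR. apply Cinv_lip; auto. }
    assert (H2' := Cpow_diff2 _ _ (Nn n) H1 H2).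
    assert (Ht0 : 0 <= t) by apply Cmod_ge_0.
    assert (0 <= (/2)^Nc) by (apply pow_le; lra).
    assert (0 <= (/2)^n) by (apply pow_le; lra).
    destruct (lt_dec n Nc) as [Hn|Hn].
    - assert (E : (/4)^n * INR (Nn n) = (/2)^n * ((/2)^n * 29^n)).
      { rewrite INR_Nn. rewrite <- !Rpow_mult_distr. f_equal. field. }
      assert ((/2)^n * 29^n <= 29 ^ Nc).
      { apply Rle_trans with (29^n). rewrite <- (Rmult_1_l (29^n)) at 2.
        apply Rmult_le_compat_r. apply pow_le; lra. apply pow_le_1'; lra.
        apply Rle_pow; [lra|lia]. }
      apply Rle_trans with ((/4)^n * (INR (Nn n) * t)).
      apply Rmult_le_compat_l; [apply pow_le; lra| exact Hl].
      rewrite <- Rmult_assoc, E. rewrite (Rmult_assoc ((/2)^n)). rewrite (Rmult_comm _ ((/2)^n)).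
      apply Rmult_le_compat_l; [lra|]. nra.
    - assert (E : (/4)^n = (/2)^n * (/2)^n) by (rewrite <- Rpow_mult_distr; f_equal; field).
      assert ((/2)^n <= (/2)^Nc) by (apply pow_decr; [lra|lia]).
      apply Rle_trans with ((/4)^n * 2). apply Rmult_le_compat_l; [apply pow_le; lra| exact H2'].
      rewrite E. assert (0 <= 29 ^ Nc * t) by nra.
      set (K := 29 ^ Nc * t) in *. set (a := (/2)^n) in *. set (c := (/2)^Nc) in *. clearbody K a c. nra. }
  eapply Rle_lt_trans. apply (CS_bound _ _ HB). lra.
Qed.


Lemma Ns_bound s N : 0 <= s < 1 -> INR N * s ^ N * (1 - s) <= 1 - s ^ N.
Proof.
  intros Hs. induction N as [|N IH].
  - simpl. lra.
  - rewrite S_INR, <- tech_pow_Rmult.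
    assert (0 <= s ^ N) by (apply pow_le; lra). assert (s ^ N <= 1) by (apply pow_le_1'; lra).
    assert (0 <= INR N) by apply pos_INR.
    set (p := s ^ N) in *. set (k := INR N) in *. clearbody p k.
    assert (s * (k * p * (1 - s)) <= s * (1 - p)) by (apply Rmult_le_compat_l; lra).
    assert (0 <= (1 - s) * (1 - s * p)) by (apply Rmult_le_pos; nra).
    replace ((k + 1) * (s * p) * (1 - s)) with (s * (k * p * (1 - s)) + s * p * (1 - s)) by ring.
    lra.
Qed.

Definition Ccst (r : R) : R := / ((1 - sqrt r) * (1 - sqrt r)).

Lemma N2r_bound r N : 0 <= r < 1 -> INR N * INR N * r ^ N <= Ccst r.
Proof.
  intros Hr. set (s := sqrt r).
  assert (Hs : 0 <= s < 1).
  { split. apply sqrt_pos. unfold s. rewrite <- sqrt_1. apply sqrt_lt_1_alt. lra. }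
  assert (Hss : s * s = r) by (apply sqrt_sqrt; lra).
  assert (H1 := Ns_bound s N Hs).
  assert (0 <= s ^ N) by (apply pow_le; lra).
  assert (HN : INR N * s ^ N <= / (1 - s)).
  { apply (Rmult_le_reg_r (1 - s)); [lra|]. rewrite Rinv_l by lra. lra. }
  assert (0 <= INR N * s ^ N) by (apply Rmult_le_pos; [apply pos_INR|lra]).
  replace (INR N * INR N * r ^ N) with ((INR N * s ^ N) * (INR N * s ^ N)).
  - unfold Ccst. fold s. rewrite Rinv_mult. 
    apply Rmult_le_compat; auto.
  - rewrite <- Hss, Rpow_mult_distr. ring.
Qed.

Lemma Ccst_pos r : 0 <= r < 1 -> 0 < Ccst r.
Proof.
  intros Hr. unfold Ccst. apply Rinv_0_lt_compat.
  assert (sqrt r < 1) by (rewrite <- sqrt_1; apply sqrt_lt_1_alt; lra). nra.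
Qed.

Definition DD (u u0 dz : C) (N : nat) : C :=
  Cplus (Cminus (Cpow u N) (Cpow u0 N)) (Cmult (Cmult (RtoC (INR N)) (Cpow u0 (S N))) dz).

Lemma DD_rec z z0 N : z <> RtoC 0 -> z0 <> RtoC 0 ->
  DD (Cinv z) (Cinv z0) (Cminus z z0) (S N) =
  Cplus (Cmult (Cinv z) (DD (Cinv z) (Cinv z0) (Cminus z z0) N))
        (Cmult (Cmult (RtoC (INR (S N))) (Cpow (Cinv z0) (S N)))
               (Cmult (Cmult (Cinv z) (Cinv z0)) (Cmult (Cminus z z0) (Cminus z z0)))).
Proof.
  intros Hz Hz0. unfold DD. rewrite S_INR. rewrite RtoC_plus.
  simpl Cpow. set (P := Cpow (Cinv z) N). set (Q := Cpow (Cinv z0) N). set (k := RtoC (INR N)).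
  unfold Cminus. field. split; auto.
Qed.

Lemma DD_bound z z0 r N : z <> RtoC 0 -> z0 <> RtoC 0 -> 0 <= r <= 1 ->
  Cmod (Cinv z) <= r -> Cmod (Cinv z0) <= r ->
  Cmod (DD (Cinv z) (Cinv z0) (Cminus z z0) N) <= INR N * INR N * r ^ (S N) * (Cmod (Cminus z z0) * Cmod (Cminus z z0)).
Proof.
  intros Hz Hz0 Hr Hu Hu0. set (d := Cmod (Cminus z z0)).
  assert (Hd : 0 <= d) by apply Cmod_ge_0.
  induction N as [|N IH].
  - unfold DD. simpl. unfold Cminus.
    replace (Cplus (Cplus 1 (Copp 1)) (Cmult (Cmult (RtoC 0) (Cmult (Cinv z0) 1)) (Cplus z (Copp z0)))) with (RtoC 0) by ring.
    rewrite Cmod_0. lra.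
  - rewrite DD_rec by auto.
    eapply Rle_trans; [apply Cmod_triangle|]. rewrite !Cmod_mult. rewrite Cmod_R, Rabs_right by (apply Rle_ge, pos_INR).
    rewrite Cmod_pow. fold d.
    assert (0 <= Cmod (Cinv z)) by apply Cmod_ge_0. assert (0 <= Cmod (Cinv z0)) by apply Cmod_ge_0.
    assert (Hp : Cmod (Cinv z0) ^ S N <= r ^ S N) by (apply pow_incr; lra).
    assert (Hp0 : 0 <= Cmod (Cinv z0) ^ S N) by (apply pow_le; lra).
    assert (H1 : Cmod (Cinv z) * Cmod (DD (Cinv z) (Cinv z0) (Cminus z z0) N) <= r * (INR N * INR N * r ^ S N * (d * d))).
    { apply Rmult_le_compat; auto. apply Cmod_ge_0. }
    assert (Hk : 0 <= INR (S N)) by apply pos_INR.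
    assert (H2 : INR (S N) * Cmod (Cinv z0) ^ S N * (Cmod (Cinv z) * Cmod (Cinv z0) * (d * d))
                 <= INR (S N) * r ^ S N * (r * r * (d * d))).
    { apply Rmult_le_compat. apply Rmult_le_pos; auto.
      apply Rmult_le_pos. apply Rmult_le_pos; auto. nra.
      apply Rmult_le_compat_l; auto.
      apply Rmult_le_compat_r. nra. apply Rmult_le_compat; auto. }
    assert (E : r ^ S (S N) = r * r ^ S N) by reflexivity.
    assert (HA : 0 <= r ^ S N * (d * d)) by (apply Rmult_le_pos; [apply pow_le; lra| nra]).
    set (A := r ^ S N * (d * d)) in *.
    assert (H3 : INR (S N) * r ^ S N * (r * r * (d * d)) <= INR (S N) * (r * A)).
    { replace (INR (S N) * r ^ S N * (r * r * (d * d))) with (INR (S N) * (r * (r * A))) by (unfold A; ring).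
      apply Rmult_le_compat_l; auto. assert (0 <= r * A) by nra. nra. }
    replace (INR (S N) * INR (S N) * r ^ S (S N) * (d * d)) with (INR (S N) * INR (S N) * (r * A)) by (unfold A; rewrite E; ring).
    replace (r * (INR N * INR N * r ^ S N * (d * d))) with (INR N * INR N * (r * A)) in H1 by (unfold A; ring).
    assert (0 <= r * A) by nra. rewrite S_INR in *. generalize (pos_INR N). intros. nra.
Qed.

Definition Lterm (z0 : C) (n : nat) : C :=
  Copp (Cmult (RtoC ((/4)^n)) (Cmult (RtoC (INR (Nn n))) (Cpow (Cinv z0) (S (Nn n))))).

Lemma Cmod_rev z z0 : Cmod z0 - Cmod (Cminus z z0) <= Cmod z.
Proof.
  assert (z0 = Cplus z (Copp (Cminus z z0))) by (unfold Cminus; ring).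
  assert (H1 := Cmod_triangle z (Copp (Cminus z z0))). rewrite <- H in H1. rewrite Cmod_opp in H1. lra.
Qed.

Lemma Nn_ge1 n : 1 <= INR (Nn n).
Proof. generalize (INR_Nn_ge n) (pos_INR n). lra. Qed.

Lemma hfun_diff z0 : 1 < Cmod z0 -> C_differentiable hfun z0.
Proof.
  intros Hz0. set (rho := (1 + (Cmod z0)) / 2).
  set (r := / rho).
  assert (Hrho : 1 < rho < (Cmod z0)) by (unfold rho; lra).
  assert (Hr : 0 <= r < 1).
  { unfold r. split. left; apply Rinv_0_lt_compat; lra. rewrite <- Rinv_1. apply Rinv_lt_contravar; lra. }
  assert (Hz0' : z0 <> RtoC 0) by (apply nz_of_ge1; lra).
  assert (Hu0 : Cmod (Cinv z0) <= r).
  { rewrite Cmod_Cinv by lra. unfold r. apply Rinv_le_contravar; lra. }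
  set (C0 := Ccst r). assert (HC : 0 < C0) by (apply Ccst_pos; auto).
  assert (HL : CB (Lterm z0) C0).
  { intros n. unfold Lterm. rewrite Cmod_opp, Cmod_RtoC_mult, Cmod_mult, Cmod_R, Cmod_pow.
    rewrite !Rabs_right by (apply Rle_ge; try apply pos_INR; apply pow_le; lra).
    assert (HN := N2r_bound r (Nn n) Hr). assert (H1 := Nn_ge1 n).
    assert (Cmod (Cinv z0) ^ S (Nn n) <= r ^ (Nn n)).
    { apply Rle_trans with (r ^ S (Nn n)). apply pow_incr; split; [apply Cmod_ge_0|auto].
      apply pow_decr; [lra|lia]. }
    assert (0 <= Cmod (Cinv z0) ^ S (Nn n)) by (apply pow_le, Cmod_ge_0).
    assert (0 <= r ^ Nn n) by (apply pow_le; lra).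
    assert (INR (Nn n) * Cmod (Cinv z0) ^ S (Nn n) <= C0).
    { apply Rle_trans with (INR (Nn n) * r ^ Nn n). apply Rmult_le_compat_l; lra.
      apply Rle_trans with (INR (Nn n) * INR (Nn n) * r ^ Nn n); [|exact HN].
      rewrite Rmult_assoc. rewrite <- (Rmult_1_l (INR (Nn n) * r ^ Nn n)) at 1.
      apply Rmult_le_compat_r; [apply Rmult_le_pos; lra | lra]. }
    rewrite (Rmult_comm C0). apply Rmult_le_compat. apply pow_le; lra. apply Rmult_le_pos; lra.
    apply pow4_le. exact H3. }
  apply crit with (CS (Lterm z0)).
  intros eps He. exists (Rmin ((Cmod z0) - rho) (eps / (4 * C0))). split.
  { apply Rmin_glb_lt; [lra| apply Rdiv_lt_0_compat; lra]. }
  intros z Hz.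
  assert (Hd1 : Cmod (Cminus z z0) < (Cmod z0) - rho) by (generalize (Rmin_l ((Cmod z0) - rho) (eps / (4 * C0))); lra).
  assert (Hd2 : Cmod (Cminus z z0) < eps / (4 * C0)) by (generalize (Rmin_r ((Cmod z0) - rho) (eps / (4 * C0))); lra).
  assert (Hzr : rho < Cmod z) by (generalize (Cmod_rev z z0); lra).
  assert (Hz' : z <> RtoC 0) by (apply nz_of_ge1; lra).
  assert (Hu : Cmod (Cinv z) <= r).
  { rewrite Cmod_Cinv by lra. unfold r. apply Rinv_le_contravar; lra. }
  unfold hfun. destruct (Rle_dec 1 (Cmod z)) as [Hz1|]; [|lra]. destruct (Rle_dec 1 (Cmod z0)) as [Hz01|]; [|lra].
  rewrite <- (CS_lin _ _ _ _ _ _ _ (hterm_CB z Hz1) (hterm_CB z0 Hz01) HL).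
  set (d := Cmod (Cminus z z0)) in *. assert (Hd : 0 <= d) by apply Cmod_ge_0.
  assert (HB : CB (fun n => Cminus (Cminus (hterm n z) (hterm n z0)) (Cmult (Lterm z0 n) (Cminus z z0))) (C0 * (d * d))).
  { intros n.
    replace (Cminus (Cminus (hterm n z) (hterm n z0)) (Cmult (Lterm z0 n) (Cminus z z0)))
      with (Cmult (RtoC ((/4)^n)) (DD (Cinv z) (Cinv z0) (Cminus z z0) (Nn n)))
      by (unfold hterm, Lterm, DD, Cminus; ring).
    rewrite Cmod_RtoC_mult, Rabs_right by (apply Rle_ge, pow_le; lra).
    assert (HD := DD_bound z z0 r (Nn n) Hz' Hz0' ltac:(lra) Hu Hu0). fold d in HD.
    assert (HN := N2r_bound r (Nn n) Hr).
    assert (r ^ S (Nn n) <= r ^ Nn n) by (apply pow_decr; [lra|lia]).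
    assert (0 <= r ^ S (Nn n)) by (apply pow_le; lra).
    assert (0 <= INR (Nn n) * INR (Nn n)) by (generalize (Nn_ge1 n); nra).
    assert (INR (Nn n) * INR (Nn n) * r ^ S (Nn n) <= C0).
    { eapply Rle_trans; [|exact HN]. apply Rmult_le_compat_l; lra. }
    assert (Cmod (DD (Cinv z) (Cinv z0) (Cminus z z0) (Nn n)) <= C0 * (d * d)).
    { eapply Rle_trans; [exact HD|]. apply Rmult_le_compat_r; nra. }
    rewrite (Rmult_comm (C0 * (d * d))). apply Rmult_le_compat. apply pow_le; lra. apply Cmod_ge_0.
    apply pow4_le. auto. }
  eapply Rle_trans. apply (CS_bound _ _ HB).
  assert (4 * C0 * d <= eps).
  { left. apply (Rmult_lt_reg_r (/ (4 * C0))). apply Rinv_0_lt_compat; lra.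
    replace (4 * C0 * d * / (4 * C0)) with d by (field; lra). exact Hd2. }
  replace (4 * (C0 * (d * d))) with ((4 * C0 * d) * d) by ring.
  apply Rmult_le_compat_r; auto.
Qed.

Lemma hfun_A0 : A0 hfun.
Proof.
  split; [|split; [|split]].
  - apply hfun_cont.
  - apply hfun_diff.
  - intros eps He. exists (Rmax 1 (4 / eps)). intros z Hz.
    assert (H1 : 1 < Cmod z) by (generalize (Rmax_l 1 (4/eps)); lra).
    assert (H2 : 4 / eps < Cmod z) by (generalize (Rmax_r 1 (4/eps)); lra).
    eapply Rle_lt_trans. apply hfun_bound; lra.
    apply (Rmult_lt_reg_r (Cmod z)); [lra|]. unfold Rdiv. rewrite Rmult_assoc, Rinv_l by lra.
    apply (Rmult_lt_reg_r (/eps)). apply Rinv_0_lt_compat; lra.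
    replace (eps * Cmod z * / eps) with (Cmod z) by (field; lra). unfold Rdiv in H2. lra.
  - apply hfun_small.
Qed.

Lemma hfun_expi y : hfun (expi y) = CS (fun n => hterm n (expi y)).
Proof. unfold hfun. rewrite Cmod_expi. destruct (Rle_dec 1 1); [reflexivity| lra]. Qed.

Lemma hterm_expi n y : hterm n (expi y) = Cmult (RtoC ((/4)^n)) (expi (INR (Nn n) * - y)).
Proof. unfold hterm. rewrite Cinv_expi, Cpow_expi. reflexivity. Qed.

Lemma hfun_fst y : fst (hfun (expi y)) = Wt y.
Proof.
  rewrite hfun_expi. unfold CS, Wt. apply Series_ext. intros n.
  rewrite hterm_expi. unfold expi; simpl.
  replace (INR (Nn n) * - y) with (- (INR (Nn n) * y)) by ring. rewrite cos_neg. ring.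
Qed.

Lemma sin_as_cos n y : sin (INR (Nn n) * y) = cos (INR (Nn n) * (y - PI / 2)).
Proof.
  destruct (Nn_1mod4 n) as [j Hj]. rewrite Hj.
  replace (INR (4 * j + 1) * (y - PI / 2)) with ((INR (4 * j + 1) * y - PI/2) + 2 * IZR (- Z.of_nat j) * PI).
  - rewrite cos_period_Z. replace (INR (4 * j + 1) * y - PI / 2) with (- (PI/2 - INR (4 * j + 1) * y)) by ring.
    rewrite cos_neg, cos_shift. reflexivity.
  - rewrite opp_IZR, <- INR_IZR_INZ, plus_INR, mult_INR. simpl. field.
Qed.

Lemma hfun_snd y : snd (hfun (expi y)) = - Wt (y - PI / 2).
Proof.
  rewrite hfun_expi. unfold CS, Wt. cbv beta iota. rewrite <- Series_opp. apply Series_ext. intros n.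
  rewrite hterm_expi. unfold expi; simpl.
  replace (INR (Nn n) * - y) with (- (INR (Nn n) * y)) by ring. rewrite sin_neg, sin_as_cos. ring.
Qed.

Lemma ZR_ext F G : (forall y, F y = G y) -> ZR G -> ZR F.
Proof.
  intros E HG theta M delta Hd. destruct (HG theta M delta Hd) as [y [Hy HM]].
  exists y. rewrite !E. auto.
Qed.

Lemma ZR_hfst : ZR (fun y => fst (hfun (expi y))).
Proof. apply (ZR_ext _ Wt). apply hfun_fst. apply weier. Qed.

Lemma ZR_hsnd : ZR (fun y => snd (hfun (expi y))).
Proof. apply (ZR_ext _ (fun y => - Wt (y - PI / 2))). apply hfun_snd. apply ZR_shift, weier. Qed.


Lemma diff_plus f g z : C_differentiable f z -> C_differentiable g z ->
  C_differentiable (fun w => Cplus (f w) (g w)) z.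
Proof.
  intros Hf Hg. destruct (crit_inv f z Hf) as [L1 H1]. destruct (crit_inv g z Hg) as [L2 H2].
  apply crit with (Cplus L1 L2). intros eps He.
  destruct (H1 (eps/2) ltac:(lra)) as [d1 [Hd1 K1]]. destruct (H2 (eps/2) ltac:(lra)) as [d2 [Hd2 K2]].
  exists (Rmin d1 d2). split; [apply Rmin_glb_lt; auto|]. intros w Hw.
  specialize (K1 w ltac:(generalize (Rmin_l d1 d2); lra)). specialize (K2 w ltac:(generalize (Rmin_r d1 d2); lra)).
  replace (Cminus (Cminus (Cplus (f w) (g w)) (Cplus (f z) (g z))) (Cmult (Cplus L1 L2) (Cminus w z)))
    with (Cplus (Cminus (Cminus (f w) (f z)) (Cmult L1 (Cminus w z))) (Cminus (Cminus (g w) (g z)) (Cmult L2 (Cminus w z))))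
    by (unfold Cminus; ring).
  eapply Rle_trans; [apply Cmod_triangle|]. lra.
Qed.

Lemma diff_scal c f z : C_differentiable f z -> C_differentiable (fun w => Cmult (RtoC c) (f w)) z.
Proof.
  intros Hf. destruct (crit_inv f z Hf) as [L H1].
  apply crit with (Cmult (RtoC c) L). intros eps He.
  assert (Hc : 0 < Rabs c + 1) by (generalize (Rabs_pos c); lra).
  destruct (H1 (eps / (Rabs c + 1))) as [d [Hd K]]. apply Rdiv_lt_0_compat; lra.
  exists d. split; auto. intros w Hw. specialize (K w Hw).
  replace (Cminus (Cminus (Cmult (RtoC c) (f w)) (Cmult (RtoC c) (f z))) (Cmult (Cmult (RtoC c) L) (Cminus w z)))
    with (Cmult (RtoC c) (Cminus (Cminus (f w) (f z)) (Cmult L (Cminus w z)))) by (unfold Cminus; ring).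
  rewrite Cmod_RtoC_mult.
  assert (Rabs c * (eps / (Rabs c + 1) * Cmod (Cminus w z)) <= eps * Cmod (Cminus w z)).
  { rewrite <- Rmult_assoc. apply Rmult_le_compat_r. apply Cmod_ge_0.
    apply (Rmult_le_reg_r (Rabs c + 1)); auto. replace (Rabs c * (eps / (Rabs c + 1)) * (Rabs c + 1)) with (Rabs c * eps) by (field; lra).
    nra. }
  eapply Rle_trans; [|exact H]. apply Rmult_le_compat_l; auto. apply Rabs_pos.
Qed.

Definition fl (f : C -> C) (lam : R) (z : C) : C :=
  if Rle_dec 1 (Cmod z) then f (Cmult (RtoC lam) z) else RtoC 0.

Lemma Cmod_lam lam z : 0 <= lam -> Cmod (Cmult (RtoC lam) z) = lam * Cmod z.
Proof. intros H. rewrite Cmod_RtoC_mult, Rabs_right by lra. reflexivity. Qed.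

Lemma fl_diff f lam z0 : A0 f -> 1 <= lam -> 1 < Cmod z0 -> C_differentiable (fl f lam) z0.
Proof.
  intros [_ [Hd _]] Hl Hz0.
  assert (Hz : 1 < Cmod (Cmult (RtoC lam) z0)) by (rewrite Cmod_lam by lra; nra).
  destruct (crit_inv f _ (Hd _ Hz)) as [L H].
  apply crit with (Cmult (RtoC lam) L). intros eps He.
  destruct (H (eps / lam) ltac:(apply Rdiv_lt_0_compat; lra)) as [d [Hdp K]].
  exists (Rmin (d / lam) (Cmod z0 - 1)). split. apply Rmin_glb_lt; [apply Rdiv_lt_0_compat|]; lra.
  intros z Hzz.
  assert (H1 : Cmod (Cminus z z0) < d / lam) by (generalize (Rmin_l (d / lam) (Cmod z0 - 1)); lra).
  assert (H2 : Cmod (Cminus z z0) < Cmod z0 - 1) by (generalize (Rmin_r (d / lam) (Cmod z0 - 1)); lra).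
  assert (Hz1 : 1 <= Cmod z) by (generalize (Cmod_rev z z0); lra).
  unfold fl. destruct (Rle_dec 1 (Cmod z)); [|lra]. destruct (Rle_dec 1 (Cmod z0)); [|lra].
  assert (E : Cminus (Cmult (RtoC lam) z) (Cmult (RtoC lam) z0) = Cmult (RtoC lam) (Cminus z z0)) by (unfold Cminus; ring).
  assert (Hm : Cmod (Cminus (Cmult (RtoC lam) z) (Cmult (RtoC lam) z0)) < d).
  { rewrite E, Cmod_lam by lra. apply (Rmult_lt_reg_r (/lam)). apply Rinv_0_lt_compat; lra.
    replace (lam * Cmod (Cminus z z0) * / lam) with (Cmod (Cminus z z0)) by (field; lra). exact H1. }
  specialize (K _ Hm). rewrite E, Cmod_lam in K by lra.
  replace (Cmult (Cmult (RtoC lam) L) (Cminus z z0)) with (Cmult L (Cmult (RtoC lam) (Cminus z z0))) by ring.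
  eapply Rle_trans. exact K. apply Req_le. field. lra.
Qed.

Definition gfun (f : C -> C) (lam c : R) (z : C) : C := Cplus (fl f lam z) (Cmult (RtoC c) (hfun z)).

Lemma gfun_A0 f lam c : A0 f -> 1 < lam -> A0 (gfun f lam c).
Proof.
  intros Hf Hl. destruct Hf as [Hc [Hd [Hlim Hs]]].
  assert (Hcp : 0 < Rabs c + 1) by (generalize (Rabs_pos c); lra).
  destruct hfun_A0 as [hc [hd [hlim hs]]].
  split; [|split; [|split]].
  - intros z Hz eps He. unfold ext_closed in *.
    assert (Hlz : 1 <= Cmod (Cmult (RtoC lam) z)) by (rewrite Cmod_lam by lra; nra).
    destruct (Hc _ Hlz (eps/2) ltac:(lra)) as [d1 [Hd1 K1]].
    destruct (hc z Hz (eps / 2 / (Rabs c + 1))) as [d2 [Hd2 K2]]. apply Rdiv_lt_0_compat; lra.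
    exists (Rmin (d1 / lam) d2). split. apply Rmin_glb_lt; [apply Rdiv_lt_0_compat|]; lra.
    intros w Hw Hwz.
    assert (H1 : Cmod (Cminus w z) < d1 / lam) by (generalize (Rmin_l (d1 / lam) d2); lra).
    assert (H2 : Cmod (Cminus w z) < d2) by (generalize (Rmin_r (d1 / lam) d2); lra).
    unfold gfun, fl. destruct (Rle_dec 1 (Cmod w)); [|lra]. destruct (Rle_dec 1 (Cmod z)); [|lra].
    assert (Hlw : 1 <= Cmod (Cmult (RtoC lam) w)) by (rewrite Cmod_lam by lra; nra).
    assert (E : Cminus (Cmult (RtoC lam) w) (Cmult (RtoC lam) z) = Cmult (RtoC lam) (Cminus w z)) by (unfold Cminus; ring).
    assert (Hm : Cmod (Cminus (Cmult (RtoC lam) w) (Cmult (RtoC lam) z)) < d1).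
    { rewrite E, Cmod_lam by lra. apply (Rmult_lt_reg_r (/lam)). apply Rinv_0_lt_compat; lra.
      replace (lam * Cmod (Cminus w z) * / lam) with (Cmod (Cminus w z)) by (field; lra). exact H1. }
    specialize (K1 _ Hlw Hm). specialize (K2 w Hw H2).
    replace (Cminus (Cplus (f (Cmult (RtoC lam) w)) (Cmult (RtoC c) (hfun w))) (Cplus (f (Cmult (RtoC lam) z)) (Cmult (RtoC c) (hfun z))))
      with (Cplus (Cminus (f (Cmult (RtoC lam) w)) (f (Cmult (RtoC lam) z))) (Cmult (RtoC c) (Cminus (hfun w) (hfun z)))) by (unfold Cminus; ring).
    eapply Rle_lt_trans; [apply Cmod_triangle|]. rewrite Cmod_RtoC_mult.
    assert (Rabs c * Cmod (Cminus (hfun w) (hfun z)) <= (Rabs c + 1) * Cmod (Cminus (hfun w) (hfun z))).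
    { apply Rmult_le_compat_r. apply Cmod_ge_0. lra. }
    assert ((Rabs c + 1) * Cmod (Cminus (hfun w) (hfun z)) < eps / 2).
    { apply (Rmult_lt_reg_r (/ (Rabs c + 1))). apply Rinv_0_lt_compat; lra.
      replace ((Rabs c + 1) * Cmod (Cminus (hfun w) (hfun z)) * / (Rabs c + 1)) with (Cmod (Cminus (hfun w) (hfun z))) by (field; lra).
      exact K2. }
    lra.
  - intros z Hz. apply diff_plus. apply fl_diff; auto. split; auto. lra.
    apply diff_scal. apply hd; auto.
  - intros eps He. destruct (Hlim (eps/2) ltac:(lra)) as [M1 HM1].
    destruct (hlim (eps / 2 / (Rabs c + 1))) as [M2 HM2]. apply Rdiv_lt_0_compat; lra.
    exists (Rmax 1 (Rmax M1 M2)). intros z Hz.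
    generalize (Rmax_l 1 (Rmax M1 M2)) (Rmax_r 1 (Rmax M1 M2)) (Rmax_l M1 M2) (Rmax_r M1 M2). intros.
    unfold gfun, fl. destruct (Rle_dec 1 (Cmod z)); [|lra].
    eapply Rle_lt_trans; [apply Cmod_triangle|]. rewrite Cmod_RtoC_mult.
    assert (Cmod (f (Cmult (RtoC lam) z)) < eps / 2).
    { apply HM1. rewrite Cmod_lam by lra. nra. }
    specialize (HM2 z ltac:(lra)).
    assert (Rabs c * Cmod (hfun z) <= (Rabs c + 1) * Cmod (hfun z)).
    { apply Rmult_le_compat_r. apply Cmod_ge_0. lra. }
    assert ((Rabs c + 1) * Cmod (hfun z) < eps / 2).
    { apply (Rmult_lt_reg_r (/ (Rabs c + 1))). apply Rinv_0_lt_compat; lra.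
      replace ((Rabs c + 1) * Cmod (hfun z) * / (Rabs c + 1)) with (Cmod (hfun z)) by (field; lra).
      exact HM2. }
    lra.
  - intros z Hz. unfold gfun, fl. destruct (Rle_dec 1 (Cmod z)); [lra|]. rewrite hs by auto.
    apply injective_projections; simpl; ring.
Qed.

Lemma open_ballC c r : open (fun w => Cmod (Cminus w c) < r).
Proof.
  intros x Hx. assert (He : 0 < (r - Cmod (Cminus x c)) / 2) by lra.
  exists (mkposreal _ He). intros y Hy. destruct Hy as [H1 H2].
  change (Rabs (fst y - fst x) < (r - Cmod (Cminus x c)) / 2) in H1.
  change (Rabs (snd y - snd x) < (r - Cmod (Cminus x c)) / 2) in H2.
  assert (Cmod (Cminus y x) < r - Cmod (Cminus x c)).
  { eapply Rle_lt_trans; [apply Cmod_le_sum|]. simpl. unfold Rminus in *. lra. }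
  replace (Cminus y c) with (Cplus (Cminus y x) (Cminus x c)) by (unfold Cminus; ring).
  eapply Rle_lt_trans; [apply Cmod_triangle|]. lra.
Qed.

Lemma list_bounds {I : Type} (p : I -> C * R) (l : list I) :
  (forall i, 0 < snd (p i)) ->
  exists dm B, 0 < dm /\ 0 <= B /\ forall i, In i l -> dm <= snd (p i) / 2 /\ Cmod (fst (p i)) + snd (p i) <= B.
Proof.
  intros Hp. induction l as [|a l IH].
  - exists 1, 0. split; [lra|split; [lra|]]. intros i [].
  - destruct IH as [dm [B [H1 [H2 H3]]]].
    exists (Rmin dm (snd (p a) / 2)), (Rmax B (Cmod (fst (p a)) + snd (p a))).
    split. apply Rmin_glb_lt; auto. specialize (Hp a). lra.
    split. generalize (Rmax_l B (Cmod (fst (p a)) + snd (p a))); lra.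
    intros i [E|Hi].
    + subst. split. apply Rmin_r. apply Rmax_r.
    + destruct (H3 i Hi) as [K1 K2]. split.
      * eapply Rle_trans; [apply Rmin_l|exact K1].
      * eapply Rle_trans; [exact K2|apply Rmax_l].
Qed.

Lemma approx_scale f K eps : A0 f -> compactC K -> (forall z, K z -> ext_closed z) -> 0 < eps ->
  exists lam, 1 < lam /\ forall z, K z -> Cmod (Cminus (f (Cmult (RtoC lam) z)) (f z)) < eps.
Proof.
  intros Hf HK HKe He. destruct Hf as [Hc _].
  set (Pg := fun q : C * R => 0 < snd q /\ forall w, ext_closed w -> Cmod (Cminus w (fst q)) < snd q ->
                 Cmod (Cminus (f w) (f (fst q))) < eps / 2).
  set (I := {q : C * R | Pg q}).
  set (O := fun (i : I) => fun w => Cmod (Cminus w (fst (proj1_sig i))) < snd (proj1_sig i) / 2).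
  destruct (HK I O) as [l Hl].
  - intros i. apply open_ballC.
  - intros z Hz. destruct (Hc z (HKe z Hz) (eps/2) ltac:(lra)) as [d [Hd Kd]].
    exists (exist Pg (z, d) (conj Hd Kd)). unfold O; simpl.
    replace (Cminus z z) with (RtoC 0) by (unfold Cminus; ring). rewrite Cmod_0. lra.
  - destruct (list_bounds (fun i : I => proj1_sig i) l) as [dm [B [Hdm [HB Hi]]]].
    { intros i. exact (proj1 (proj2_sig i)). }
    exists (1 + dm / (2 * (B + 1))). split.
    { assert (0 < dm / (2 * (B + 1))) by (apply Rdiv_lt_0_compat; lra). lra. }
    intros z Hz. destruct (Hl z Hz) as [i [Hin Hzi]].
    destruct (Hi i Hin) as [Hi1 Hi2]. unfold O in Hzi.
    destruct (proj2_sig i) as [Hd0 Kd0].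
    set (c0 := fst (proj1_sig i)) in *. set (d0 := snd (proj1_sig i)) in *.
    assert (Hzb : Cmod z <= B).
    { replace z with (Cplus (Cminus z c0) c0) by (unfold Cminus; ring).
      eapply Rle_trans; [apply Cmod_triangle|]. lra. }
    set (lam := 1 + dm / (2 * (B + 1))).
    assert (Hdl : Cmod (Cminus (Cmult (RtoC lam) z) z) < dm).
    { replace (Cminus (Cmult (RtoC lam) z) z) with (Cmult (RtoC (dm / (2 * (B + 1)))) z)
        by (unfold lam, Cminus; rewrite RtoC_plus; ring).
      rewrite Cmod_lam by (apply Rlt_le, Rdiv_lt_0_compat; lra).
      apply (Rmult_lt_reg_r (2 * (B + 1))); [lra|].
      replace (dm / (2 * (B + 1)) * Cmod z * (2 * (B + 1))) with (dm * Cmod z) by (field; lra).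
      generalize (Cmod_ge_0 z); nra. }
    assert (Hlz : Cmod (Cminus (Cmult (RtoC lam) z) c0) < d0).
    { replace (Cminus (Cmult (RtoC lam) z) c0) with (Cplus (Cminus (Cmult (RtoC lam) z) z) (Cminus z c0)) by (unfold Cminus; ring).
      eapply Rle_lt_trans; [apply Cmod_triangle|]. lra. }
    assert (Hez : ext_closed z) by auto.
    assert (Hlam : 1 <= lam) by (unfold lam; assert (0 < dm / (2 * (B + 1))) by (apply Rdiv_lt_0_compat; lra); lra).
    assert (Helz : ext_closed (Cmult (RtoC lam) z)) by (unfold ext_closed in *; rewrite Cmod_lam by lra; nra).
    assert (K1 := Kd0 _ Helz Hlz). assert (Kz := Kd0 z Hez ltac:(lra)).
    replace (Cminus (f (Cmult (RtoC lam) z)) (f z)) with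
      (Cplus (Cminus (f (Cmult (RtoC lam) z)) (f c0)) (Copp (Cminus (f z) (f c0)))) by (unfold Cminus; ring).
    eapply Rle_lt_trans; [apply Cmod_triangle|]. rewrite Cmod_opp. lra.
Qed.

Lemma f_lip_circle f lam theta : A0 f -> 1 < lam ->
  exists B d, 0 < d /\ forall y, theta < y < theta + d ->
    Cmod (Cminus (f (Cmult (RtoC lam) (expi y))) (f (Cmult (RtoC lam) (expi theta)))) <= B * (y - theta).
Proof.
  intros [_ [Hd _]] Hl.
  assert (Hz : 1 < Cmod (Cmult (RtoC lam) (expi theta))) by (rewrite Cmod_lam, Cmod_expi by lra; lra).
  destruct (crit_inv f _ (Hd _ Hz)) as [L H].
  destruct (H 1 ltac:(lra)) as [d [Hdp K]].
  exists ((Cmod L + 1) * (2 * lam)), (d / (2 * lam)). split. apply Rdiv_lt_0_compat; lra.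
  intros y Hy.
  set (w := Cmult (RtoC lam) (expi y)). set (w0 := Cmult (RtoC lam) (expi theta)).
  assert (E : Cminus w w0 = Cmult (RtoC lam) (Cminus (expi y) (expi theta))) by (unfold w, w0, Cminus; ring).
  assert (Hw : Cmod (Cminus w w0) <= 2 * lam * (y - theta)).
  { rewrite E, Cmod_lam by lra. generalize (expi_lip y theta). rewrite Rabs_right by lra. intros. nra. }
  assert (Hw2 : Cmod (Cminus w w0) < d).
  { eapply Rle_lt_trans. exact Hw. apply (Rmult_lt_reg_r (/ (2 * lam))). apply Rinv_0_lt_compat; lra.
    replace (2 * lam * (y - theta) * / (2 * lam)) with (y - theta) by (field; lra). unfold Rdiv in Hy. lra. }
  specialize (K w Hw2).
  replace (Cminus (f w) (f w0)) with (Cplus (Cminus (Cminus (f w) (f w0)) (Cmult L (Cminus w w0))) (Cmult L (Cminus w w0))) by (unfold Cminus; ring).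
  eapply Rle_trans; [apply Cmod_triangle|]. rewrite Cmod_mult.
  assert (0 <= Cmod L) by apply Cmod_ge_0. assert (0 <= Cmod (Cminus w w0)) by apply Cmod_ge_0.
  assert (Cmod L * Cmod (Cminus w w0) <= Cmod L * (2 * lam * (y - theta))) by (apply Rmult_le_compat_l; auto).
  fold w0 in K. lra.
Qed.

Theorem density : A0_dense (fun f => class_Z f).
Proof.
  intros U HU [f [Hf Uf]].
  destruct (HU f Hf Uf) as [K [eps [HK [HKe [He HKg]]]]].
  destruct (approx_scale f K (eps/2) Hf HK HKe ltac:(lra)) as [lam [Hl Hap]].
  set (c := eps / 16). assert (Hc : 0 < c) by (unfold c; lra).
  assert (HgA : A0 (gfun f lam c)) by (apply gfun_A0; auto).
  exists (gfun f lam c). split; [exact HgA|split].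
  - apply HKg; auto. intros z Hz.
    assert (Hz1 : 1 <= Cmod z) by (apply HKe; auto).
    unfold gfun, fl. destruct (Rle_dec 1 (Cmod z)); [|lra].
    replace (Cminus (Cplus (f (Cmult (RtoC lam) z)) (Cmult (RtoC c) (hfun z))) (f z))
      with (Cplus (Cminus (f (Cmult (RtoC lam) z)) (f z)) (Cmult (RtoC c) (hfun z))) by (unfold Cminus; ring).
    eapply Rle_lt_trans; [apply Cmod_triangle|]. rewrite Cmod_RtoC_mult, Rabs_right by lra.
    specialize (Hap z Hz). assert (Hh := hfun_bound z Hz1).
    assert (4 / Cmod z <= 4).
    { unfold Rdiv. rewrite <- (Rmult_1_r 4) at 2. apply Rmult_le_compat_l; [lra|].
      rewrite <- Rinv_1. apply Rinv_le_contravar; lra. }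
    assert (c * Cmod (hfun z) <= c * 4) by (apply Rmult_le_compat_l; lra).
    unfold c in *. lra.
  - split.
    + intros z Hz eps' He'. destruct HgA as [Hgc _].
      destruct (Hgc z (ltac:(unfold ext_closed; lra)) eps' He') as [d [Hd Kd]].
      exists d. split; auto. intros w Hw Hwz. apply Kd; auto. unfold ext_closed; lra.
    + intros theta.
      assert (Eg : forall y, gfun f lam c (expi y) = Cplus (f (Cmult (RtoC lam) (expi y))) (Cmult (RtoC c) (hfun (expi y)))).
      { intros y. unfold gfun, fl. rewrite Cmod_expi. destruct (Rle_dec 1 1); [reflexivity|lra]. }
      assert (HL : forall theta0, exists B d, 0 < d /\ forall y, theta0 < y < theta0 + d ->
                   Cmod (Cminus (f (Cmult (RtoC lam) (expi y))) (f (Cmult (RtoC lam) (expi theta0)))) <= B * (y - theta0)).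
      { intros theta0. apply f_lip_circle; auto. }
      split; apply ZR_limsup.
      * apply (ZR_ext _ (fun y => fst (f (Cmult (RtoC lam) (expi y))) + c * fst (hfun (expi y)))).
        { intros y. rewrite Eg. simpl. ring. }
        apply ZR_perturb; auto. apply ZR_hfst.
        intros theta0. destruct (HL theta0) as [B [d [Hd KB]]]. exists B, d. split; auto.
        intros y Hy. eapply Rle_trans; [|apply KB; auto]. exact (fst_le (Cminus (f (Cmult (RtoC lam) (expi y))) (f (Cmult (RtoC lam) (expi theta0))))).
      * apply (ZR_ext _ (fun y => snd (f (Cmult (RtoC lam) (expi y))) + c * snd (hfun (expi y)))).
        { intros y. rewrite Eg. simpl. ring. }
        apply ZR_perturb; auto. apply ZR_hsnd.
        intros theta0. destruct (HL theta0) as [B [d [Hd KB]]]. exists B, d. split; auto.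
        intros y Hy. eapply Rle_trans; [|apply KB; auto]. exact (snd_le (Cminus (f (Cmult (RtoC lam) (expi y))) (f (Cmult (RtoC lam) (expi theta0))))).
Qed.


Lemma sin_period_Z x (k : Z) : sin (x + 2 * IZR k * PI) = sin x.
Proof.
  destruct (Z_le_gt_dec 0 k) as [Hk|Hk].
  - rewrite <- (Z2Nat.id k Hk). rewrite <- INR_IZR_INZ. apply sin_period.
  - assert (Hk' : (0 <= - k)%Z) by lia.
    replace (IZR k) with (- INR (Z.to_nat (- k))).
    + rewrite <- (sin_period (x + 2 * - INR (Z.to_nat (- k)) * PI) (Z.to_nat (-k))).
      f_equal; ring.
    + rewrite INR_IZR_INZ, Z2Nat.id by exact Hk'. rewrite opp_IZR. ring.
Qed.

Lemma expi_period x (k : Z) : expi (x + 2 * IZR k * PI) = expi x.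
Proof. unfold expi. rewrite cos_period_Z, sin_period_Z. reflexivity. Qed.

Lemma reduce_angle theta : exists m : Z, 0 <= theta - 2 * IZR m * PI <= 2 * PI.
Proof.
  assert (HP := PI_RGT_0).
  destruct (archimed (theta / (2 * PI))) as [H1 H2].
  exists (up (theta / (2 * PI)) - 1)%Z. rewrite minus_IZR.
  set (u := IZR (up (theta / (2 * PI)))) in *.
  assert (E : theta = (theta / (2 * PI)) * (2 * PI)) by (field; lra).
  set (q := theta / (2 * PI)) in *. rewrite E. split; nra.
Qed.

Definition Kc (z : C) : Prop := exists t, z = expi t.

Lemma Kc_ext z : Kc z -> ext_closed z.
Proof. intros [t ->]. unfold ext_closed. rewrite Cmod_expi. lra. Qed.

Lemma Kc_compact : compactC Kc.
Proof.
  intros I O Hop Hcov.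
  assert (Good : forall t : R, exists p : posreal * I, forall y, Rabs (y - t) < fst p -> O (snd p) (expi y)).
  { intros t. destruct (Hcov (expi t) (ex_intro _ t eq_refl)) as [i Hi].
    destruct (Hop i (expi t) Hi) as [e He]. exists (e, i). simpl. intros y Hy.
    apply He. split.
    - change (Rabs (cos y - cos t) < e). eapply Rle_lt_trans; [apply cos_lip|exact Hy].
    - change (Rabs (sin y - sin t) < e). eapply Rle_lt_trans; [apply sin_lip|exact Hy]. }
  set (F := fun t => proj1_sig (constructive_indefinite_description _ (Good t))).
  assert (HF : forall t y, Rabs (y - t) < fst (F t) -> O (snd (F t)) (expi y)).
  { intros t. exact (proj2_sig (constructive_indefinite_description _ (Good t))). }
  apply NNPP. intros Hn.
  apply (compactness_list 1 (0, tt) (2 * PI, tt) (fun x => fst (F (fst x)))). intros [l Hl].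
  apply Hn. exists (map (fun x : Compactness.Tn 1 R => snd (F (fst x))) l).
  intros z [t ->]. destruct (reduce_angle t) as [m Hm].
  set (t0 := t - 2 * IZR m * PI) in *.
  assert (Et : expi t = expi t0).
  { replace t with (t0 + 2 * IZR m * PI) by (unfold t0; ring). apply expi_period. }
  destruct (Hl (t0, tt)) as [x [Hx1 [_ Hx3]]].
  { simpl. split; [lra| trivial]. }
  destruct x as [x1 []]. simpl in Hx3. destruct Hx3 as [Hx3 _].
  exists (snd (F x1)). split.
  - apply (in_map (fun x : Compactness.Tn 1 R => snd (F (fst x))) l (x1, tt)). exact Hx1.
  - rewrite Et. apply HF. exact Hx3.
Qed.

Definition Pk (pr : C -> R) (k : nat) (g : C -> C) (theta y : R) : Prop :=
  theta < y < theta + / (INR k + 1) /\ INR k * (y - theta) < Rabs (pr (g (expi y)) - pr (g (expi theta))).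

Definition Uk (k : nat) (g : C -> C) : Prop :=
  forall theta, (exists y, Pk fst k g theta y) /\ (exists y, Pk snd k g theta y).

Lemma good_theta (pr : C -> R) (Hpr : forall a b, Rabs (pr a - pr b) <= Cmod (Cminus a b)) f k theta :
  A0 f -> (exists y, Pk pr k f theta y) ->
  exists eta, 0 < eta /\ forall theta', Rabs (theta' - theta) < eta -> forall g,
    (forall t, Cmod (Cminus (g (expi t)) (f (expi t))) < eta) -> exists y, Pk pr k g theta' y.
Proof.
  intros [Hc _] [y1 [[Hy1 Hy2] Hy3]].
  set (F := fun t => pr (f (expi t))).
  set (s := Rabs (F y1 - F theta) - INR k * (y1 - theta)).
  assert (Hs : 0 < s) by (unfold s, F; lra).
  assert (Hk : 0 <= INR k) by apply pos_INR.
  assert (Hk1 : 0 < / (INR k + 1)) by (apply Rinv_0_lt_compat; lra).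
  destruct (Hc (expi theta) ltac:(apply Kc_ext; exists theta; reflexivity) (s / 4) ltac:(lra)) as [df [Hdf Kdf]].
  set (eta := Rmin (Rmin (df / 2) (y1 - theta)) (Rmin (theta + / (INR k + 1) - y1) (Rmin (s / (4 * (INR k + 1))) (s / 8)))).
  assert (Hs4 : 0 < s / (4 * (INR k + 1))) by (apply Rdiv_lt_0_compat; lra).
  assert (He : 0 < eta).
  { unfold eta. repeat apply Rmin_glb_lt; lra. }
  assert (E1 : eta <= df / 2) by (unfold eta; eapply Rle_trans; [apply Rmin_l|apply Rmin_l]).
  assert (E2 : eta <= y1 - theta) by (unfold eta; eapply Rle_trans; [apply Rmin_l|apply Rmin_r]).
  assert (E3 : eta <= theta + / (INR k + 1) - y1) by (unfold eta; eapply Rle_trans; [apply Rmin_r|apply Rmin_l]).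
  assert (E4 : eta <= s / (4 * (INR k + 1))) by (unfold eta; eapply Rle_trans; [apply Rmin_r|]; eapply Rle_trans; [apply Rmin_r|apply Rmin_l]).
  assert (E5 : eta <= s / 8) by (unfold eta; eapply Rle_trans; [apply Rmin_r|]; eapply Rle_trans; [apply Rmin_r|apply Rmin_r]).
  exists eta. split; auto.
  intros theta' Ht g Hg. exists y1.
  assert (Htt := Ht). apply Rabs_def2 in Htt. destruct Htt as [Ht1 Ht2'].
  split. split; lra.
  assert (HF : Rabs (F theta' - F theta) < s / 4).
  { eapply Rle_lt_trans; [apply Hpr|]. apply Kdf. apply Kc_ext; exists theta'; reflexivity.
    eapply Rle_lt_trans; [apply expi_lip|]. lra. }
  assert (G1 : Rabs (pr (g (expi y1)) - pr (f (expi y1))) < eta) by (eapply Rle_lt_trans; [apply Hpr| apply Hg]).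
  assert (G2 : Rabs (pr (g (expi theta')) - pr (f (expi theta'))) < eta) by (eapply Rle_lt_trans; [apply Hpr| apply Hg]).
  apply Rabs_def2 in G1. apply Rabs_def2 in G2. apply Rabs_def2 in HF.
  assert (Hke : INR k * eta <= s / 4).
  { apply Rle_trans with ((INR k + 1) * eta). nra.
    apply (Rmult_le_reg_r (/ (INR k + 1))). apply Rinv_0_lt_compat; lra.
    replace ((INR k + 1) * eta * / (INR k + 1)) with eta by (field; lra).
    replace (s / 4 * / (INR k + 1)) with (s / (4 * (INR k + 1))) by (field; lra). exact E4. }
  assert (Hkt : INR k * (theta - theta') <= INR k * eta) by (apply Rmult_le_compat_l; lra).
  unfold s, F in *. set (A := pr (g (expi y1)) - pr (g (expi theta'))).
  generalize (Rle_abs A) (Rle_abs (- A)). rewrite Rabs_Ropp. intros HA1 HA2.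
  unfold A in *.
  destruct (Rcase_abs (pr (f (expi y1)) - pr (f (expi theta)))) as [Hb|Hb].
  - rewrite Rabs_left in * by exact Hb. nra.
  - rewrite Rabs_right in * by exact Hb. nra.
Qed.

Lemma fst_lip a b : Rabs (fst a - fst b) <= Cmod (Cminus a b).
Proof. exact (fst_le (Cminus a b)). Qed.
Lemma snd_lip a b : Rabs (snd a - snd b) <= Cmod (Cminus a b).
Proof. exact (snd_le (Cminus a b)). Qed.

Lemma Uk_open k : A0_open (Uk k).
Proof.
  intros f Hf Uf.
  assert (Good : forall theta, exists eta : posreal, forall theta', Rabs (theta' - theta) < eta -> forall g,
     (forall t, Cmod (Cminus (g (expi t)) (f (expi t))) < eta) ->
     (exists y, Pk fst k g theta' y) /\ (exists y, Pk snd k g theta' y)).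
  { intros theta. destruct (Uf theta) as [U1 U2].
    destruct (good_theta fst fst_lip f k theta Hf U1) as [e1 [He1 K1]].
    destruct (good_theta snd snd_lip f k theta Hf U2) as [e2 [He2 K2]].
    assert (He : 0 < Rmin e1 e2) by (apply Rmin_glb_lt; auto).
    exists (mkposreal _ He). simpl. intros theta' Ht g Hg.
    assert (Rmin e1 e2 <= e1) by apply Rmin_l. assert (Rmin e1 e2 <= e2) by apply Rmin_r.
    split; [apply K1|apply K2]; try lra; intros t; specialize (Hg t); lra. }
  set (delta := fun theta => proj1_sig (constructive_indefinite_description _ (Good theta))).
  assert (Hdelta : forall theta theta', Rabs (theta' - theta) < delta theta -> forall g,
     (forall t, Cmod (Cminus (g (expi t)) (f (expi t))) < delta theta) ->
     (exists y, Pk fst k g theta' y) /\ (exists y, Pk snd k g theta' y)).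
  { intros theta. exact (proj2_sig (constructive_indefinite_description _ (Good theta))). }
  destruct (compactness_value_1d 0 (2 * PI) delta) as [d Hd].
  exists Kc, d. split; [apply Kc_compact|]. split; [apply Kc_ext|]. split; [apply cond_pos|].
  intros g Hg Hgf theta.
  destruct (reduce_angle theta) as [m Hm].
  set (t0 := theta - 2 * IZR m * PI) in *.
  apply NNPP. intros Hn. apply (Hd t0 Hm). intros [t [Ht1 [Ht2 Ht3]]]. apply Hn.
  assert (Hclose : forall t', Cmod (Cminus (g (expi t')) (f (expi t'))) < delta t).
  { intros t'. eapply Rlt_le_trans; [apply Hgf; exists t'; reflexivity| exact Ht3]. }
  destruct (Hdelta t t0 Ht2 g Hclose) as [[y1 [Hy1 Hy1']] [y2 [Hy2 Hy2']]].
  assert (Eth : expi theta = expi t0).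
  { replace theta with (t0 + 2 * IZR m * PI) by (unfold t0; ring). apply expi_period. }
  split.
  - exists (y1 + 2 * IZR m * PI). unfold Pk. rewrite expi_period, Eth.
    replace (y1 + 2 * IZR m * PI - theta) with (y1 - t0) by (unfold t0; ring).
    split; [unfold t0 in *; lra| exact Hy1'].
  - exists (y2 + 2 * IZR m * PI). unfold Pk. rewrite expi_period, Eth.
    replace (y2 + 2 * IZR m * PI - theta) with (y2 - t0) by (unfold t0; ring).
    split; [unfold t0 in *; lra| exact Hy2'].
Qed.

Lemma Uk_char f : A0 f -> (class_Z f <-> forall k, Uk k f).
Proof.
  intros Hf. split.
  - intros [_ HZ] k theta. destruct (HZ theta) as [Z1 Z2].
    assert (Hk : 0 < / (INR k + 1)) by (apply Rinv_0_lt_compat; generalize (pos_INR k); lra).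
    split.
    + destruct (Z1 (INR k) _ Hk) as [y [Hy HM]]. exists y. split; auto.
      unfold Rdiv in HM. rewrite Rabs_mult, Rabs_Rinv, (Rabs_right (y - theta)) in HM by lra.
      apply (Rmult_lt_reg_r (/ (y - theta))). apply Rinv_0_lt_compat; lra.
      replace (INR k * (y - theta) * / (y - theta)) with (INR k) by (field; lra). exact HM.
    + destruct (Z2 (INR k) _ Hk) as [y [Hy HM]]. exists y. split; auto.
      unfold Rdiv in HM. rewrite Rabs_mult, Rabs_Rinv, (Rabs_right (y - theta)) in HM by lra.
      apply (Rmult_lt_reg_r (/ (y - theta))). apply Rinv_0_lt_compat; lra.
      replace (INR k * (y - theta) * / (y - theta)) with (INR k) by (field; lra). exact HM.
  - intros HU. split.
    + intros z Hz eps He. destruct Hf as [Hc _].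
      destruct (Hc z ltac:(unfold ext_closed; lra) eps He) as [d [Hd Kd]].
      exists d. split; auto. intros w Hw Hwz. apply Kd; auto. unfold ext_closed; lra.
    + assert (Main : forall pr theta, (forall k, exists y, Pk pr k f theta y) ->
                limsup_right_infinite (fun y => pr (f (expi y))) theta).
      { intros pr theta Hk M delta Hd.
        destruct (nat_above (Rmax M (/ delta))) as [k Hkk].
        assert (HMk : M < INR k) by (generalize (Rmax_l M (/delta)); lra).
        assert (Hdk : / delta < INR k) by (generalize (Rmax_r M (/delta)); lra).
        assert (Hd2 : / (INR k + 1) < delta).
        { assert (0 < / delta) by (apply Rinv_0_lt_compat; lra).
          rewrite <- (Rinv_inv delta). apply Rinv_lt_contravar. nra. lra. }
        destruct (Hk k) as [y [[Hy1 Hy2] HM]]. exists y. split; [lra|].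
        unfold Rdiv. rewrite Rabs_mult, Rabs_Rinv, (Rabs_right (y - theta)) by lra.
        apply (Rmult_lt_reg_r (y - theta)); [lra|]. rewrite Rmult_assoc, Rinv_l by lra.
        assert (M * (y - theta) <= INR k * (y - theta)) by (apply Rmult_le_compat_r; lra). lra. }
      intros theta. split; apply Main; intros k; destruct (HU k theta); auto.
Qed.

Theorem proposition2p4 :
  A0_Gdelta (fun f => class_Z f) /\ A0_dense (fun f => class_Z f).
Proof.
  split.
  - exists Uk. split. apply Uk_open. apply Uk_char.
  - apply density.
Qed.
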